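(* Let $L,k,N,a,r,\epsilon,p,l_j,t_j$, the state $|\phi_{final}\rangle$ and the measurement outcome $m_k$ be as in the context. Let $s_0\in\{0,1,\dots,r-1\}$ be such that $2^{l_k+1}\cdot\frac{s_0}{r}$ is an integer, i.e. $\frac{s_0}{r}=0.c_1c_2\cdots c_{l_k+1}$ in binary. Then the probability that $m_k=c_{l_k}c_{l_k+1}0\cdots0$ (a $t_k$-bit string) is at least $\frac{1}{r}$.
   Context: $L\ge1$, $k\ge1$ integers with $k\mid L$; $N$ an $L$-bit integer; $a<N$ positive with $\gcd(a,N)=1$; $r$ the order of $a$ mod $N$; $\epsilon>0$. Bit strings are identified with binary integers (most significant bit first). $|\psi_{t,\omega}\rangle=QFT^{-1}\frac{1}{\sqrt{2^t}}\sum_{j=0}^{2^t-1}e^{2\pi ij\omega}|j\rangle$ with $QFT|j\rangle=\frac{1}{\sqrt{2^t}}\sum_{x=0}^{2^t-1}e^{2\pi ijx/2^t}|x\rangle$. $|u_s\rangle=\frac{1}{\sqrt r}\sum_{q=0}^{r-1}e^{-2\pi isq/r}|a^q\bmod N\rangle$ ($L$ qubits), orthonormal for $s=0,\dots,r-1$. Parameters: $p=\lceil\log_2(2+\frac{k}{2\epsilon})\rceil$; $l_j=(j-1)\frac Lk+1$ for $j=1,\dots,k$, $l_{k+1}=2L$; $t_j=l_{j+1}+2-l_j+p$. Registers $A_j$ ($t_j$ qubits, $j=1,\dots,k$) and $C$ ($L$ qubits) are in the state $|\phi_{final}\rangle=\frac{1}{\sqrt r}\sum_{s=0}^{r-1}\big(\bigotimes_{j=1}^k|\psi_{t_j,2^{l_j-1}s/r}\rangle_{A_j}\big)|u_s\rangle_C$,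 and $m_k$ is the $t_k$-bit outcome of measuring register $A_k$ in the computational basis. *)

(* Defs.v *)
From HB Require Import structures.
From mathcomp Require Import all_boot all_order all_algebra.
From mathcomp Require Import complex.
From mathcomp Require Import reals exp trigo.
Unset Printing Implicit Defensive.
Import Order.TTheory GRing.Theory Num.Theory.
Local Open Scope ring_scope.
Local Open Scope complex_scope.

Section Defs.
Variable R : realType.

Definition expi (theta : R) : R[i] := (cos theta) +i* (sin theta).

Definition normsq (z : R[i]) : R := (@complex.Re R z) ^+ 2 + (@complex.Im R z) ^+ 2.

Definition is_order (N a r : nat) : Prop :=
  (0 < r)%N /\ a ^ r = 1 %[mod N] /\
  (forall q, (0 < q < r)%N -> a ^ q <> 1 %[mod N]).

Definition Lbit (L N : nat) : Prop := (2 ^ L.-1 <= N < 2 ^ L)%N.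

Definition p_of (k : nat) (eps : R) : nat :=
  `| Num.ceil (ln (2 + k%:R / (2 * eps)) / ln 2) |%N.

(* l_j for j = 1..k+1 (1-indexed): l_j = (j-1) L/k + 1, l_{k+1} = 2L *)
Definition l_ (L k j : nat) : nat :=
  if j == k.+1 then (2 * L)%N else ((j - 1) * (L %/ k) + 1)%N.

Definition t_ (L k p j : nat) : nat := (l_ L k j.+1 + 2 - l_ L k j + p)%N.

(* component x (0 <= x < 2^t) of |psi_{t,omega}> =
   QFT^{-1} (2^{-t/2} sum_y e^{2 pi i y omega} |y>), where
   QFT^{-1}|y> = 2^{-t/2} sum_x e^{-2 pi i y x / 2^t} |x> *)
Definition psi_amp (t : nat) (omega : R) (x : nat) : R[i] :=
  \sum_(y < 2 ^ t)
     ((Num.sqrt (2 ^+ t))^-1)%:C * expi (2 * pi * y%:R * omega) *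
     (((Num.sqrt (2 ^+ t))^-1)%:C *
       expi (- (2 * pi * y%:R * x%:R / (2 ^+ t)))).

Definition u_amp (N a r s y : nat) : R[i] :=
  ((Num.sqrt r%:R)^-1)%:C *
  \sum_(q < r) (if (a ^ q %% N == y)%N then expi (- (2 * pi * (s * q)%:R / r%:R))
                else 0).

Definition omega (L k r j s : nat) : R := (2 ^ (l_ L k j - 1) * s)%:R / r%:R.

(* basis states of A_1 (x) ... (x) A_k : x : 'I_k -> 'I_B (j-th register is
   x (j-1), 0-indexed), restricted to x j < 2^{t_{j+1}}; B bounds all 2^{t_j}. *)
Definition Bnd (L p : nat) : nat := (2 ^ (2 * L + 2 + p))%N.

Definition valid_basis (L k p : nat) (x : {ffun 'I_k -> 'I_(Bnd L p)}) : bool :=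
  [forall j : 'I_k, (x j < 2 ^ t_ L k p j.+1)%N].

Definition phi_amp (L k N a r p : nat) (x : {ffun 'I_k -> 'I_(Bnd L p)}) (y : nat) : R[i] :=
  ((Num.sqrt r%:R)^-1)%:C *
  \sum_(s < r)
     ((\prod_(j < k) psi_amp (t_ L k p j.+1) (omega L k r j.+1 s) (x j)) *
      u_amp N a r s y).

Definition prob_Ak (L k N a r p m : nat) : R :=
  \sum_(x : {ffun 'I_k -> 'I_(Bnd L p)} |
          valid_basis L k p x && [exists j : 'I_k, (j.+1 == k) && (x j == m :> nat)])
     \sum_(y < 2 ^ L) normsq (phi_amp L k N a r p x y).

(* bit c_i (1-indexed) of s0/r = 0.c_1 c_2 ... c_n  (n = number of bits) *)
Definition bit_c (r s0 n i : nat) : nat := ((s0 * 2 ^ n %/ r) %/ 2 ^ (n - i)) %% 2.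

End Defs.

(* Main.v *)
Require Import Defs.
From HB Require Import structures.
From mathcomp Require Import all_boot all_order all_algebra.
From mathcomp Require Import complex.
From mathcomp Require Import reals exp trigo.
From mathcomp Require Import ring lra zify.
Import Order.TTheory GRing.Theory Num.Theory.
Lemma ar1 L k i : (0 < L)%N -> (0 < k)%N -> (k %| L)%N -> (i <= k.+1)%N -> i <> k.+1 ->
  ((i - 1) * (L %/ k) + 1 <= 2 * L)%N.
Proof.
move=> hL hk hkL hi hne.
have hkd : L = (L %/ k * k)%N by rewrite divnK.
move: hkd; set d := (L %/ k)%N => hkd.
have hik : (i - 1 <= k)%N by lia.
have := leq_mul hik (leqnn d); lia.
Qed.
Lemma ar2 L k : (0 < L)%N -> (0 < k)%N -> (k %| L)%N ->
  (1 <= (k - 1) * (L %/ k) + 1 <= L)%N.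
Proof.
move=> hL hk hkL.
have hkd : L = (L %/ k * k)%N by rewrite divnK.
move: hkd; set d := (L %/ k)%N => hkd.
have hd : (0 < d)%N by rewrite /d divn_gt0 // dvdn_leq.
clearbody d. apply/andP; split; first by rewrite addn1.
rewrite {1}hkd; have : (k - 1 < k)%N by lia.
nia.
Qed.
Lemma ar3 (c1 c2 T : nat) : (c1 < 2)%N -> (c2 < 2)%N ->
  (c1 * 2 ^ T.+1 + c2 * 2 ^ T < 2 ^ T.+2)%N.
Proof.
move=> h1 h2; rewrite !expnS; have : (0 < 2 ^ T)%N by rewrite expn_gt0.
nia.
Qed.
Lemma ar4 (lk T r s0 : nat) : (1 <= lk)%N -> (0 < r)%N -> (r %| s0 * 2 ^ (lk + 1))%N ->
  (2 ^ (lk - 1) * s0 * 2 ^ T.+2 =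
   ((s0 * 2 ^ (lk + 1) %/ r) %/ 4 * 2 ^ T.+2 +
    (((s0 * 2 ^ (lk + 1) %/ r) %/ 2 ^ (lk + 1 - lk)) %% 2 * 2 ^ T.+1 +
     ((s0 * 2 ^ (lk + 1) %/ r) %/ 2 ^ (lk + 1 - (lk + 1))) %% 2 * 2 ^ T)) * r)%N.
Proof.
move=> hlk hr hdv.
have -> : (lk + 1 - lk = 1)%N by lia.
rewrite subnn expn0 divn1 expn1.
have hS := divnK hdv.
move: hS; set S := (s0 * 2 ^ (lk + 1) %/ r)%N => hS.
have hE : (2 ^ (lk + 1) = 2 ^ (lk - 1) * 4)%N.
  by rewrite -[4%N]/(2 ^ 2)%N -expnD; congr (_ ^ _)%N; lia.
have e1 : (S = S %/ 4 * 4 + (S %/ 2) %% 2 * 2 + S %% 2)%N by lia.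
rewrite !expnS.
transitivity (S * r * 2 ^ T)%N; last by rewrite {1}e1; ring.
by rewrite hS hE; ring.
Qed.

Local Open Scope ring_scope.
Lemma realeq (R : fieldType) (x K m q r : nat) : (x * q = (K * q + m) * r)%N ->
  (r%:R : R) != 0 -> (q%:R : R) != 0 ->
  (x%:R / r%:R : R) = K%:R + m%:R / q%:R.
Proof.
move=> e hr hq.
have e' : (x%:R * q%:R : R) = (K%:R * q%:R + m%:R) * r%:R.
  by rewrite -!natrM -natrD -natrM e.
rewrite -[x%:R](mulfK hq) e'; field; by apply/andP; split.
Qed.

Local Open Scope complex_scope.

Section S.
Variable R : realType.
Notation C := (R[i]).

Lemma nsC (z : C) : (normsq R z)%:C = z * conjc z.
Proof.
case: z => a b; rewrite /normsq /=; apply/eqP; rewrite eq_complex /=.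
by apply/andP; split; apply/eqP; rewrite /=; ring.
Qed.

Lemma expiD (a b : R) : expi R (a + b) = expi R a * expi R b.
Proof.
rewrite /expi /= sinD cosD; apply/eqP; rewrite eq_complex /=.
by apply/andP; split; apply/eqP; ring.
Qed.

Lemma expiJ (a : R) : conjc (expi R a) = expi R (- a).
Proof. by rewrite /expi /= cosN sinN. Qed.

Lemma expi0 : expi R 0 = 1 :> C.
Proof. by rewrite /expi cos0 sin0. Qed.

Lemma expiX (a : R) n : expi R a ^+ n = expi R (a *+ n).
Proof.
elim: n => [|n IH]; first by rewrite expr0 mulr0n expi0.
by rewrite exprS IH mulrS expiD.
Qed.

Lemma expi2pi_nat n : expi R (2 * pi * n%:R) = 1 :> C.
Proof.
have -> : 2 * pi * n%:R = (pi *+ 2) *+ n :> R by rewrite mulr_natr mulrC mulr_natr.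
rewrite -expiX /expi cos2pi sin2pi; exact: expr1n.
Qed.

Lemma expiN2pi_nat n : expi R (- (2 * pi * n%:R)) = 1 :> C.
Proof. by rewrite -expiJ expi2pi_nat conjc1. Qed.

Lemma cos_neq1 (phi : R) : 0 < phi < pi *+ 2 -> cos phi != 1.
Proof.
move=> /andP[h0 h1]; apply/negP => /eqP hc.
have hu : 0 < phi / 2 < pi.
  apply/andP; split; first by rewrite divr_gt0.
  by rewrite ltr_pdivrMr // mulr_natr.
have := sin_gt0_pi hu.
have e : phi = (phi / 2) *+ 2 by rewrite -mulr_natr mulfVK // pnatr_eq0.
rewrite e cos_mulr2n in hc.
have hs : sin (phi / 2) ^+ 2 = 0.
  have h2 : cos (phi / 2) ^+ 2 = 1 by move: hc; rewrite mulr2n; lra.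
  by rewrite sin2cos2 h2 subrr.
by move/eqP: hs; rewrite expf_eq0 /= => /eqP ->; rewrite ltxx.
Qed.

Lemma expi_neq1 (phi : R) : 0 < phi < pi *+ 2 -> expi R phi != 1 /\ expi R (- phi) != 1.
Proof.
move=> h; have hc := @cos_neq1 phi h; split; apply/negP => /eqP; rewrite /expi.
  by case => /eqP; rewrite (negbTE hc).
by rewrite cosN; case => /eqP; rewrite (negbTE hc).
Qed.

Lemma geo0 (z : C) n : z != 1 -> z ^+ n = 1 -> \sum_(x < n) z ^+ x = 0.
Proof.
move=> hz hn.
have : (z - 1) * \sum_(x < n) z ^+ x = z ^+ n - 1.
  elim: n {hn} => [|n IH]; first by rewrite big_ord0 mulr0 expr0 subrr.
  by rewrite big_ord_recr /= mulrDr IH exprS; ring.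
rewrite hn subrr => /eqP; rewrite mulf_eq0 subr_eq0 (negbTE hz) /= => /eqP //.
Qed.


Definition W (n y x : nat) : C := expi R (- (2 * pi * (y * x)%:R / n%:R)).
Definition ns (z : C) : C := z * conjc z.

Lemma arg_range (n a b : nat) : (a < b < n)%N ->
  (0 : R) < 2 * (pi : R) * (b%:R - a%:R) / n%:R < (pi : R) *+ 2.
Proof.
move=> /andP[hab hbn].
have n0 : (0 : R) < n%:R by rewrite ltr0n; lia.
have hd : (0 : R) < b%:R - a%:R by rewrite subr_gt0 ltr_nat.
have hd2 : (b%:R - a%:R) / n%:R < (1 : R).
  rewrite ltr_pdivrMr // mul1r.
  have : (b%:R : R) < n%:R by rewrite ltr_nat.
  have : (0 : R) <= a%:R by [].
  lra.
have pi0 := @pi_gt0 R.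
apply/andP; split.
  by rewrite -mulrA; apply: mulr_gt0; [apply: mulr_gt0 | apply: divr_gt0].
rewrite -mulr_natl -!mulrA mul1r.
have h : pi * ((b%:R - a%:R) / n%:R) < (pi : R) by rewrite gtr_pMr.
lra.
Qed.

Lemma ortho n (y y' : 'I_n) :
  \sum_(x < n) W n y x * conjc (W n y' x) = (y == y')%:R * n%:R.
Proof.
have hn : (0 < n)%N by case: y => /= ? ?; lia.
have n0 : (n%:R : R) != 0 by rewrite pnatr_eq0 -lt0n.
case: eqP => [<-|/eqP hyy].
  rewrite mul1r; under eq_bigr => x _ do rewrite /W expiJ -expiD subrr expi0.
  by rewrite sumr_const card_ord.
set z := expi R (2 * pi * ((y' : nat)%:R - (y : nat)%:R) / n%:R).
have e : forall x : 'I_n, W n y x * conjc (W n y' x) = z ^+ x.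
  move=> x; rewrite /W expiJ -expiD expiX; congr (expi R _).
  rewrite !natrM -mulr_natr; field; exact: n0.
under eq_bigr => x _ do rewrite e.
rewrite mul0r; apply: geo0.
  rewrite /z; case: (ltngtP y y') => h.
  - by case: (expi_neq1 _ (@arg_range n y y' _)) => //; apply/andP; split => //.
  - have -> : 2 * pi * ((y' : nat)%:R - (y : nat)%:R) / n%:R =
       - (2 * pi * ((y : nat)%:R - (y' : nat)%:R) / n%:R) :> R by field.
    by case: (expi_neq1 _ (@arg_range n y' y _)) => //; apply/andP; split => //.
  - by move: hyy; rewrite (val_inj h) eqxx.
rewrite /z expiX.
have -> : (2 * pi * ((y' : nat)%:R - (y : nat)%:R) / n%:R) *+ n =
   2 * pi * (y' : nat)%:R + - (2 * pi * (y : nat)%:R) :> R.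
  rewrite -mulr_natr; field; exact: n0.
by rewrite expiD expi2pi_nat expiN2pi_nat mulr1.
Qed.

Lemma ns_sum (I : finType) (F : I -> C) :
  ns (\sum_i F i) = \sum_i \sum_j F i * conjc (F j).
Proof.
by rewrite /ns rmorph_sum mulr_suml; apply: eq_bigr => i _; rewrite mulr_sumr.
Qed.

Lemma parseval n (c : 'I_n -> C) :
  \sum_(x < n) ns (\sum_(y < n) c y * W n y x) = n%:R * \sum_(y < n) ns (c y).
Proof.
under eq_bigr => x _ do rewrite ns_sum.
rewrite exchange_big /= mulr_sumr; apply: eq_bigr => y _.
rewrite exchange_big /=.
under eq_bigr => y' _.
  under eq_bigr => x _ do rewrite rmorphM mulrACA.
  rewrite -mulr_sumr ortho.
  over.
rewrite (bigD1 y) //= big1 ?addr0; last first.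
  by move=> j /negbTE; rewrite eq_sym => ->; rewrite mul0r mulr0.
by rewrite eqxx mul1r /ns mulrC.
Qed.


Lemma sum_delta (I : finType) (i : I) (F : I -> C) :
  \sum_j (i == j)%:R * F j = F i.
Proof.
rewrite (bigD1 i) //= big1 ?addr0 ?eqxx ?mul1r //.
by move=> j /negbTE; rewrite eq_sym => ->; rewrite mul0r.
Qed.

Lemma sum_ind M (v : nat) : (v < M)%N -> \sum_(y < M) (v == y)%:R = 1 :> C.
Proof.
move=> h; rewrite (bigD1 (Ordinal h)) //= eqxx big1 ?addr0 // => j hj.
case: eqP => // e; move: hj; suff -> : j = Ordinal h by rewrite eqxx.
by apply: val_inj.
Qed.

Lemma collapse n M (g : 'I_n -> nat) (F : 'I_n -> C) :
  injective g -> (forall q, g q < M)%N ->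
  \sum_(y < M) ns (\sum_(q < n) (g q == y)%:R * F q) = \sum_(q < n) ns (F q).
Proof.
move=> ginj gM.
under eq_bigr => y _ do rewrite ns_sum.
rewrite exchange_big /=; apply: eq_bigr => q _.
rewrite exchange_big /=.
under eq_bigr => q' _.
  under eq_bigr => y _ do rewrite rmorphM /= rmorph_nat mulrACA -natrM.
  rewrite -mulr_suml.
  have -> : \sum_(y < M) ((g q == y) * (g q' == y))%:R = (q == q')%:R :> C.
    case: (eqVneq q q') => [<-|hne].
      under eq_bigr => y _ do rewrite mulnb andbb.
      by rewrite sum_ind.
    rewrite big1 // => y _.
    case: (eqVneq (g q) y) => [e|]; last by rewrite mul0n.
    case: (eqVneq (g q') y) => [e'|]; last by rewrite muln0.
    by move: hne; rewrite (ginj q q') ?eqxx // e e'.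
  over.
by rewrite sum_delta.
Qed.


Lemma nsM (a b : C) : ns (a * b) = ns a * ns b.
Proof. by rewrite /ns rmorphM mulrACA. Qed.

Lemma ite_nat (b : bool) (x : C) : (if b then x else 0) = b%:R * x.
Proof. by case: b; rewrite ?mul1r ?mul0r. Qed.

Lemma kappa2 n : (0 < n)%N ->
  ((Num.sqrt (n%:R : R))^-1)%:C * ((Num.sqrt (n%:R : R))^-1)%:C = ((n%:R : R)^-1)%:C.
Proof.
move=> hn; rewrite -rmorphM /= -invfM -expr2 sqr_sqrtr //.
Qed.

Lemma ns_real (x : R) : ns x%:C = (x * x)%:C.
Proof. by rewrite /ns conjc_real rmorphM. Qed.

Lemma phi_y n M (g : 'I_n -> nat) (P : 'I_n -> C) :
  (0 < n)%N -> injective g -> (forall q, g q < M)%N ->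
  \sum_(y < M) ns (((Num.sqrt (n%:R : R))^-1)%:C *
     \sum_(s < n) (P s * (((Num.sqrt (n%:R : R))^-1)%:C *
        \sum_(q < n) (if (g q == y)%N then W n s q else 0))))
  = ((n%:R : R)^-1)%:C * \sum_(s < n) ns (P s).
Proof.
move=> hn ginj gM.
set k := ((Num.sqrt (n%:R : R))^-1)%:C.
have e : forall y : 'I_M, k * \sum_(s < n) (P s * (k *
        \sum_(q < n) (if (g q == y)%N then W n s q else 0))) =
     (k * k) * \sum_(q < n) (g q == y)%:R * (\sum_(s < n) P s * W n s q).
  move=> y; rewrite -mulrA; congr (_ * _).
  under eq_bigr => s _ do rewrite mulrCA mulr_sumr.
  rewrite -mulr_sumr exchange_big /=; congr (_ * _); apply: eq_bigr => q _.
  rewrite mulr_sumr; apply: eq_bigr => s _.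
  by rewrite ite_nat mulrCA.
under eq_bigr => y _ do rewrite e nsM.
rewrite -mulr_sumr collapse // parseval kappa2 // ns_real mulrA; congr (_ * _).
have -> : (n%:R : C) = (n%:R : R)%:C by rewrite rmorph_nat.
rewrite -rmorphM /= -mulrA mulVf ?mulr1 // pnatr_eq0 -lt0n //.
Qed.


Lemma kappa2r (x : R) : 0 <= x ->
  ((Num.sqrt x)^-1)%:C * ((Num.sqrt x)^-1)%:C = (x^-1)%:C.
Proof. by move=> hx; rewrite -rmorphM /= -invfM -expr2 sqr_sqrtr. Qed.

Lemma ns_expi (a : R) : ns (expi R a) = 1.
Proof. by rewrite /ns expiJ -expiD subrr expi0. Qed.

Lemma natC n : (n%:R : C) = (n%:R : R)%:C.
Proof.
elim: n => // n IH; rewrite !mulrS IH; apply/eqP; rewrite eq_complex /= addr0 !eqxx //.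
Qed.

Lemma fin_norm (x : R) m : x != 0 -> x = m%:R ->
  (m%:R : C) * ((x^-1 * x^-1)%:C *+ m) = 1.
Proof.
move=> hx e; rewrite natC -(rmorphMn (real_complex R)) -rmorphM /=.
rewrite -e -mulr_natr -e mulrA mulrA mulfV // mul1r mulVf //.
Qed.

Lemma psi_W t (om : R) (x : nat) : psi_amp R t om x =
  \sum_(y < 2 ^ t) (((2 ^+ t : R)^-1)%:C * expi R (2 * pi * y%:R * om)) * W (2 ^ t) y x.
Proof.
apply: eq_bigr => y _.
rewrite mulrACA kappa2r ?exprn_ge0 // /W natrM natrX.
by rewrite !mulrA.
Qed.

Lemma psi_norm t (om : R) :
  \sum_(x < 2 ^ t) ns (psi_amp R t om x) = 1.
Proof.
under eq_bigr => x _ do rewrite psi_W.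
rewrite parseval.
under eq_bigr => y _ do rewrite nsM ns_expi mulr1 ns_real.
rewrite sumr_const card_ord; apply: fin_norm; first by rewrite expf_neq0 // pnatr_eq0.
by rewrite natrX.
Qed.


Lemma psi_peak t (om : R) (m K : nat) :
  om = K%:R + m%:R / 2 ^+ t -> psi_amp R t om m = 1.
Proof.
move=> hom; rewrite /psi_amp.
under eq_bigr => y _.
  rewrite mulrACA kappa2r ?exprn_ge0 // -expiD.
  have -> : 2 * pi * y%:R * om + - (2 * pi * y%:R * m%:R / 2 ^+ t) =
     2 * pi * (y * K)%:R :> R.
    rewrite hom natrM; have h : (2 ^+ t : R) != 0 by rewrite expf_neq0 // pnatr_eq0.
    by field.
  rewrite expi2pi_nat mulr1.
  over.
rewrite sumr_const card_ord.
have h : (2 ^+ t : R) != 0 by rewrite expf_neq0 // pnatr_eq0.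
rewrite -(rmorphMn (real_complex R)) /= -mulr_natr -natrX mulVf ?natrX //.
Qed.


Lemma ns_prod (I : finType) (F : I -> C) : ns (\prod_i F i) = \prod_i ns (F i).
Proof. by rewrite /ns rmorph_prod -big_split. Qed.

Lemma sum_nsC n (f : 'I_n -> C) :
  (\sum_(y < n) normsq R (f y))%:C = \sum_(y < n) ns (f y).
Proof. by rewrite rmorph_sum; apply: eq_bigr => y _; exact: nsC. Qed.

Lemma ns_ge0 (z : C) : 0 <= ns z.
Proof. exact: mulcJ_ge0. Qed.

End S.

Lemma order_inj (N a r : nat) : (0 < a)%N -> coprime a N -> is_order N a r ->
  injective (fun q : 'I_r => a ^ q %% N)%N.
Proof.
move=> ha hc [hr0 [_ hr2]].
suff H : forall q q' : 'I_r, (q < q')%N -> (a ^ q %% N = a ^ q' %% N)%N -> False.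
  move=> q q' e; case: (ltngtP q q') => h.
  - by case: (H _ _ h e).
  - by case: (H _ _ h (esym e)).
  - exact: val_inj.
move=> q q' hq e.
have hq' : ((q' : nat) = q + (q' - q))%N by lia.
have hd : (0 < q' - q < r)%N by have := ltn_ord q'; lia.
apply: (hr2 _ hd).
have ha1 : (1 <= a ^ (q' - q))%N by rewrite expn_gt0 ha.
apply/eqP; rewrite eqn_mod_dvd //.
have : (a ^ q * a ^ (q' - q) == a ^ q %[mod N])%N.
  by rewrite -expnD -hq' e.
rewrite eqn_mod_dvd; last by rewrite leq_pmulr.
rewrite -{2}[(a ^ q)%N]muln1 -mulnBr Gauss_dvdr //.
by rewrite coprime_sym coprimeXl.
Qed.

Theorem lemma2 (R : realType) (L k N a r : nat) (eps : R) (s0 : nat) :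
  (1 <= L)%N -> (1 <= k)%N -> (k %| L)%N -> Lbit L N ->
  (0 < a < N)%N -> coprime a N -> is_order N a r -> 0 < eps ->
  (s0 < r)%N -> (r %| s0 * 2 ^ (l_ L k k + 1))%N ->
  let p := p_of R k eps in
  let lk := l_ L k k in
  let tk := t_ L k p k in
  let c := bit_c r s0 (lk + 1) in
  let m := (c lk * 2 ^ (tk - 1) + c (lk + 1) * 2 ^ (tk - 2))%N in
  (r%:R : R)^-1 <= prob_Ak R L k N a r p m.
Proof.
move=> hL hk hkL hN /andP[ha0 haN] hcop hord heps hs0 hdiv.
rewrite /is_true; cbv zeta.
set p := p_of R k eps. set lk := l_ L k k. set tk := t_ L k p k. set c := bit_c r s0 (lk + 1).
set m := (c lk * 2 ^ (tk - 1) + c (lk + 1) * 2 ^ (tk - 2))%N.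
have hord' := hord; case: hord' => [hr0 [hr1 hr2]].
move: hN; rewrite /Lbit => /andP[hN1 hN2].
rewrite -/lk in hdiv.
have hl : forall i, (i <= k.+1)%N -> (l_ L k i <= 2 * L)%N.
  move=> i hi; rewrite /l_; case: eqP => // hne; exact: ar1.
have htB : forall j : 'I_k, (2 ^ t_ L k p j.+1 <= Bnd L p)%N.
  move=> j; rewrite /Bnd leq_exp2l // /t_.
  have := hl j.+2 (ltn_ord j); move: (l_ L k j.+2) (l_ L k j.+1) => u v hu.
  clear -hu; lia.
have hlk : (1 <= lk <= L)%N.
  rewrite /lk /l_; case: eqP => [e|_]; last exact: ar2.
  by move: e; clear; lia.
have htk : tk = (2 * L + 2 - lk + p)%N by rewrite /tk /t_ /l_ eqxx.
set T := (tk - 2)%N.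
have hT : tk = T.+2.
  rewrite /T htk; move: hlk; clear; lia.
have hc2 : forall i, (c i < 2)%N by move=> i; rewrite /c /bit_c ltn_mod.
have hm : (m < 2 ^ tk)%N.
  rewrite /m hT !subSS !subn0; exact: ar3.
have hmB : (m < Bnd L p)%N.
  apply: (leq_trans hm); have hk1 : (k.-1 < k)%N by rewrite prednK.
  have := htB (Ordinal hk1).
  by rewrite /= prednK.
have hN0 : (0 < N)%N by apply: leq_ltn_trans haN.
have ginj := @order_inj N a r ha0 hcop hord.
have gM : forall q : 'I_r, (a ^ q %% N < 2 ^ L)%N.
  by move=> q; exact: ltn_trans (ltn_pmod _ hN0) hN2.
have e1 : forall x : {ffun 'I_k -> 'I_(Bnd L p)},
  (\sum_(y < 2 ^ L) normsq R (phi_amp R L k N a r p x y))%:C =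
  ((r%:R : R)^-1)%:C * \sum_(s < r) ns R (\prod_(j < k)
      psi_amp R (t_ L k p j.+1) (omega R L k r j.+1 s) (x j)).
  move=> x; apply: etrans (sum_nsC R _ _) _.
  exact: (phi_y R r (2 ^ L) (fun q : 'I_r => (a ^ q %% N)%N)
     (fun s : 'I_r => \prod_(j < k) psi_amp R (t_ L k p j.+1) (omega R L k r j.+1 s) (x j)) hr0 ginj gM).
pose Q := fun (j : 'I_k) => [pred v : 'I_(Bnd L p) |
   (v < 2 ^ t_ L k p j.+1)%N && ((j.+1 == k) ==> (v == m :> nat))].
pose G := fun (s : 'I_r) (j : 'I_k) (v : 'I_(Bnd L p)) =>
   ns R (psi_amp R (t_ L k p j.+1) (omega R L k r j.+1 s) v).
have key : (prob_Ak R L k N a r p m)%:C =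
    ((r%:R : R)^-1)%:C * \sum_(s < r) \prod_(j < k) \sum_(v | Q j v) G s j v.
  rewrite /prob_Ak rmorph_sum.
  apply: etrans; first by apply: eq_bigr => x _; exact: e1.
  rewrite -mulr_sumr; congr (_ * _).
  rewrite exchange_big /=; apply: eq_bigr => s _.
  under eq_bigr => x _ do rewrite ns_prod.
  rewrite bigA_distr_big_dep; apply: eq_bigl => x.
  apply/idP/idP.
    move=> /andP[/forallP hv /existsP[j0 /andP[/eqP hj0 /eqP hx0]]].
    apply/familyP => j; rewrite unfold_in /= hv /=; apply/implyP => /eqP hj.
    have -> : j = j0 by apply: val_inj; rewrite /=; move: hj hj0; clear; lia.
    by apply/eqP.
  move/familyP => h; apply/andP; split.
    by apply/forallP => j; have /andP[] := h j.
  have hk1 : (k.-1 < k)%N by rewrite prednK.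
  apply/existsP; exists (Ordinal hk1).
  have := h (Ordinal hk1); rewrite unfold_in /= => /andP[_ /implyP hh2].
  rewrite /= prednK // eqxx /=; apply: hh2; by rewrite /= prednK.
have hone : \prod_(j < k) \sum_(v | Q j v) G (Ordinal hs0) j v = 1.
  apply: big1 => j _; case: (eqVneq j.+1 k) => hj.
    rewrite (big_pred1 (Ordinal hmB)); last first.
      move=> v; rewrite /Q inE hj eqxx /= -/tk; apply/idP/idP.
        by move=> /andP[_ /eqP e]; apply/eqP; apply: val_inj.
      by move/eqP => ->; rewrite /= hm eqxx.
    rewrite /G hj /=.
    have hmm : m = (c lk * 2 ^ T.+1 + c (lk + 1) * 2 ^ T)%N.
      by rewrite /m hT !subSS !subn0.
    have hlk1 : (1 <= lk)%N by case/andP: hlk.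
    have := @ar4 lk T r s0 hlk1 hr0 hdiv; rewrite -hT -/(bit_c r s0 (lk + 1) lk).
    rewrite -/(bit_c r s0 (lk + 1) (lk + 1)) -/c -hmm => hnat.
    rewrite (psi_peak R _ _ m ((s0 * 2 ^ (lk + 1) %/ r) %/ 4)).
      by rewrite /ns conjc1 mulr1.
    rewrite /omega -/lk -natrX; apply: realeq hnat _ _.
      by rewrite pnatr_eq0 -lt0n.
    by rewrite pnatr_eq0 -lt0n expn_gt0.
  rewrite (eq_bigl (fun v : 'I_(Bnd L p) => (v < 2 ^ t_ L k p j.+1)%N)); last first.
    by move=> v; rewrite /Q inE (negbTE hj) andbT.
  rewrite -[RHS](psi_norm R (t_ L k p j.+1) (omega R L k r j.+1 (Ordinal hs0))).
  by rewrite (big_ord_widen (Bnd L p) (fun v : nat => ns R (psi_amp R (t_ L k p j.+1) (omega R L k r j.+1 (Ordinal hs0)) v)) (htB j)).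
have H : ((r%:R : R)^-1)%:C <= (prob_Ak R L k N a r p m)%:C.
  rewrite key -{1}[((r%:R : R)^-1)%:C]mulr1; apply: ler_wpM2l.
    by rewrite ler0c invr_ge0 ler0n.
  rewrite (bigD1 (Ordinal hs0)) //= hone lerDl.
  apply: sumr_ge0 => s _; apply: prodr_ge0 => j _; apply: sumr_ge0 => v _.
  exact: ns_ge0.
by rewrite -lecR; exact: H.
Qed.
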